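(* For every $x>0$, $$x\,e^{-x^2/6}<\sqrt{2\pi}\Big(\Phi(x)-\frac12\Big)<x\,e^{-x^2/6+x^4/90}.$$
   Context: $\Phi$ is the standard normal distribution function. *)

(* Defs.v *)
From Stdlib Require Import Reals.
From Coquelicot Require Import Coquelicot.
Open Scope R_scope.

Definition std_normal_pdf (t : R) : R := / sqrt (2 * PI) * exp (- t ^ 2 / 2).

Definition Phi (x : R) : R :=
  RInt_gen std_normal_pdf (Rbar_locally m_infty) (at_point x).

(* Main.v *)
Require Import Defs.
From Stdlib Require Import Reals.
From Coquelicot Require Import Coquelicot.
From Stdlib Require Import Lra Lia.
From HB Require Import structures.
From mathcomp Require Import all_boot all_order all_algebra.
From mathcomp Require Import classical_sets boolp reals ereal Rstruct Rstruct_topology topology normedtype derive realfun sequences measure lebesgue_measure lebesgue_integral ftc trigo gauss_integral.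
Set Warnings "-notation-overridden,-ambiguous-paths".

Module MC.
Import Order.TTheory GRing.Theory Num.Theory.
Import numFieldNormedType.Exports.
Local Open Scope classical_set_scope.
Local Open Scope ring_scope.

Lemma quot_cvg (F : R -> R) (x l : R) : derivable_pt_lim F x l ->
  h^-1 * (F (h + x) - F x) @[h --> (0:R)^'] --> l.
Proof.
move=> H.
pose q h := if h == 0 then l else h^-1 * (F (h + x) - F x).
have Hq : continuity_pt q 0.
  move=> eps epos; have [d Hd] := H eps epos.
  exists d; split; first exact: cond_pos d.
  move=> h [[_ hn0] hd]; rewrite /q eqxx.
  have hn0' : h <> 0 by move=> e; apply: hn0; rewrite e.
  have /negbTE -> : h != 0 by apply/eqP.
  simpl in hd |- *; rewrite /R_dist in hd |- *.
  rewrite Rminus_0_r in hd.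
  have := Hd h hn0' hd.
  by rewrite Rplus_comm /Rdiv Rmult_comm.
move/continuity_pt_cvg' : Hq.
rewrite {2}/q eqxx => Hq.
apply: cvg_trans Hq.
apply: near_eq_cvg.
near=> h.
rewrite /q ifF //.
apply/negbTE.
near: h.
exact: nbhs_dnbhs_neq.
Unshelve. all: by end_near.
Qed.

Lemma deriv_bridge (F : R -> R) (x l : R) : derivable_pt_lim F x l ->
  @derivable _ R^o R^o F x 1 /\ @derive1 _ R^o F x = l.
Proof.
move=> /quot_cvg H; split.
  apply/cvg_ex; exists l.
  apply: cvg_trans H; apply: near_eq_cvg; near=> h.
  by rewrite /= -[h%:A]/(h * 1) mulr1.
rewrite /derive1; exact: cvg_lim.
Unshelve. all: by end_near.
Qed.

Lemma RInt_derivable (f : R -> R) (a x : R) : (forall t, continuity_pt f t) ->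
  derivable_pt_lim (fun y => RInt f a y) x (f x).
Proof.
move=> cf; apply/is_derive_Reals.
apply: is_derive_RInt; last by apply/continuity_pt_filterlim.
exists (mkposreal 1 Rlt_0_1) => y _.
apply: RInt_correct; apply: ex_RInt_continuous => z _.
by apply/continuity_pt_filterlim.
Qed.

Lemma integral_bridge (f : R -> R) (a b : R) : a < b ->
  (forall t, continuity_pt f t) ->
  (\int[lebesgue_measure]_(x in `[a, b]) (f x)%:E)%E = (RInt f a b)%:E.
Proof.
move=> ab cf.
pose F := fun y => RInt f a y.
have dF y := RInt_derivable f a y cf.
have cF y : continuity_pt F y.
  by apply: derivable_continuous_pt; exists (f y); exact: dF.
rewrite (@continuous_FTC2 R f F a b ab).
- rewrite /F RInt_point.
  have -> : (Hierarchy.zero : R) = 0 by [].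
  rewrite -EFinD; congr (_%:E); exact: subr0.
- by apply: continuous_subspaceT => t; apply/continuity_pt_cvg.
- split.
  + by move=> y _; have [] := deriv_bridge _ _ _ (dF y).
  + by apply: cvg_at_right_filter; apply/continuity_pt_cvg.
  + by apply: cvg_at_left_filter; apply/continuity_pt_cvg.
- by move=> y _; have [] := deriv_bridge _ _ _ (dF y).
Qed.

Lemma pi_PI : pi = PI.
Proof.
have h1 := @integral0_oneDsqr R 1 ler01.
have cf : forall t, continuity_pt (fun x : R => (oneDsqr x)^-1) t.
  by move=> t; apply/continuity_pt_cvg; exact: continuous_oneDsqrV.
have h2 := integral_bridge (fun x : R => (oneDsqr x)^-1) 0 1 ltr01 cf.
rewrite /Rintegral h2 /= atan1 in h1.
have h3 : is_RInt (fun x : R => (oneDsqr x)^-1) 0 1 (minus (Ratan.atan 1) (Ratan.atan 0)).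
  apply: (is_RInt_ext (fun x => / (1 + x ^ 2))).
    by move=> x _; rewrite /oneDsqr RinvE; congr (_^-1); rewrite /= !RealsE mulr1 expr2.
  apply: is_RInt_derive.
    by move=> x _; apply/is_derive_Reals; exact: derivable_pt_lim_atan.
  move=> x _; apply/continuity_pt_filterlim.
  apply: (@continuity_pt_ext (fun x : R => (oneDsqr x)^-1)).
    by move=> y; rewrite /oneDsqr RinvE; congr (_^-1); rewrite /= !RealsE mulr1 expr2.
  exact: cf.
rewrite (is_RInt_unique _ _ _ _ h3) Ratan.atan_1 Ratan.atan_0 in h1.
move: h1; rewrite /minus /plus /opp /= !RealsE /=.
have -> : @Hierarchy.opp R_AbelianGroup 0 = 0 by apply: Ropp_0.
rewrite addr0 => h.
have h4 : (4%:R : R) != 0 by rewrite pnatr_eq0.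
by apply: (mulIf (invr_neq0 h4)); rewrite h.
Qed.

Definition RR : realType := R.

Lemma cvg_bridge (g : RR -> RR) (l : RR) : g x @[x --> +oo] --> l ->
  filterlim g (Rbar_locally p_infty) (locally l).
Proof.
move=> H0; have H := (proj1 (cvgrPdist_lt _ _)) H0.
apply/filterlim_locally => eps.
have e0 : 0 < pos eps by apply/RltP; exact: cond_pos.
have [M [_ HM]] := H _ _ e0.
exists M => x Mx.
move/RltP: Mx => Mx; have := HM x Mx.
move=> h.
change (Rlt (Rabs (Rplus (g x) (Ropp l))) (pos eps)).
apply/RltP; rewrite RabsE distrC; exact: h.
Qed.

Lemma cvg_Ig : @gauss_integral_proof.integral0_gauss RR x @[x --> +oo] --> Num.sqrt (pi : RR) / 2.
Proof.
  have : Num.sqrt (@gauss_integral_proof.integral0_gauss RR x ^+ 2) @[x --> +oo]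
      --> Num.sqrt ((pi : RR) / 4).
    apply: continuous_cvg => //;
      [exact: sqrt_continuous|exact: gauss_integral_proof.cvg_integral0_gauss_sqr].
  rewrite sqrtrM ?pi_ge0// sqrtrV// (_ : 4 = 2 ^+ 2); last first.
    by rewrite expr2 -natrM.
  rewrite sqrtr_sqr ger0_norm//.
  rewrite (_ : (fun _ => Num.sqrt _) = gauss_integral_proof.integral0_gauss)//.
  apply/funext => r; rewrite sqrtr_sqr// ger0_norm//.
  exact: gauss_integral_proof.integral0_gauss_ge0.
Qed.

Lemma gauss_RInt_lim :
  filterlim (fun y => RInt (fun t => exp (Ropp (pow t 2))) 0 y) (Rbar_locally p_infty)
    (locally (Rdiv (sqrt PI) (IZR 2))).
Proof.
apply: cvg_bridge.
have cg : forall t, continuity_pt (@gauss_fun RR) t.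
  by move=> t; apply/continuity_pt_cvg; exact: continuous_gauss_fun.
have E : forall t, @gauss_fun RR t = exp (Ropp (pow t 2)).
  by move=> t; rewrite /gauss_fun RexpE RpowE.
rewrite RsqrtE -pi_PI RdivE IZRposE INRE /=.
apply: cvg_trans cvg_Ig.
apply: near_eq_cvg; near=> x.
have x0 : 0 < x by near: x; exists 0; split => // y.
rewrite /gauss_integral_proof.integral0_gauss /Rintegral.
rewrite (integral_bridge (@gauss_fun RR) 0 x x0 cg) /=.
by apply: RInt_ext => t _; rewrite E.
Unshelve. all: by end_near.
Qed.

End MC.
Import MC.

Open Scope R_scope.

Definition g (t : R) : R := exp (- t ^ 2 / 2).

Lemma g_derive t : derivable_pt_lim g t (- t * g t).
Proof.
apply/is_derive_Reals. unfold g. auto_derive. auto. replace (- (t * (t * 1)) * / 2) with (- t ^ 2 / 2) by field. field.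
Qed.

Lemma g_cont t : continuity_pt g t.
Proof. apply derivable_continuous_pt. exists (- t * g t). apply g_derive. Qed.

Lemma K_derive y : derivable_pt_lim (fun y => RInt g 0 y) y (g y).
Proof. exact (RInt_derivable g 0 y g_cont). Qed.

Lemma g_ex_RInt a b : ex_RInt g a b.
Proof.
apply (@ex_RInt_continuous R_CompleteNormedModule). intros z _. apply continuity_pt_filterlim. apply g_cont.
Qed.

Definition G (y : R) : R := RInt (fun t => exp (- t ^ 2)) 0 y.

Lemma sqrt2_pos : 0 < sqrt 2.
Proof. apply sqrt_lt_R0. lra. Qed.

Lemma K_scale y : RInt g 0 y = sqrt 2 * G (y / sqrt 2).
Proof.
have s2 := sqrt2_pos.
have e : ex_RInt (fun t => exp (- t ^ 2)) (/ sqrt 2 * 0 + 0) (/ sqrt 2 * y + 0).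
  apply (@ex_RInt_continuous R_CompleteNormedModule). intros z _.
  apply continuity_pt_filterlim. apply derivable_continuous_pt.
  exists (exp (- z^2) * (- (2 * z))). apply/is_derive_Reals. auto_derive. auto.
  replace (- (z * (z * 1))) with (- z ^ 2) by ring. ring.
have H := RInt_comp_lin (fun t => exp (- t ^ 2)) (/ sqrt 2) 0 0 y e.
unfold G.
replace (y / sqrt 2) with (/ sqrt 2 * y + 0) by (unfold Rdiv; ring).
replace (/ sqrt 2 * 0 + 0) with 0 in H by ring.
rewrite -H.
assert (E : RInt (fun y0 : R => scal (/ sqrt 2) (exp (- (/ sqrt 2 * y0 + 0) ^ 2))) 0 y
   = RInt (fun t => scal (/ sqrt 2) (g t)) 0 y).
  apply RInt_ext. intros t _. unfold g. f_equal. f_equal.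
  replace (/ sqrt 2 * t + 0) with (t / sqrt 2) by (unfold Rdiv; ring).
  unfold Rdiv. rewrite Rpow_mult_distr. rewrite pow_inv.
  replace (sqrt 2 ^ 2) with 2. field.
  simpl. rewrite Rmult_1_r sqrt_sqrt; lra.
rewrite E RInt_scal. 2: apply g_ex_RInt.
rewrite /scal /= /mult /=. change (@eq R (RInt g 0 y) (sqrt 2 * (/ sqrt 2 * RInt g 0 y))). rewrite -Rmult_assoc Rinv_r. 2: lra. rewrite Rmult_1_l. reflexivity.
Qed.

Lemma K_lim : filterlim (fun y => RInt g 0 y) (Rbar_locally p_infty)
  (locally (sqrt (2 * PI) / 2)).
Proof.
have s2 := sqrt2_pos.
apply (filterlim_ext (fun y => sqrt 2 * G (y / sqrt 2))).
  intros y. rewrite K_scale. reflexivity.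
replace (sqrt (2 * PI) / 2) with (scal (sqrt 2) (sqrt PI / 2)).
2: { rewrite /scal /= /mult /=. rewrite sqrt_mult; [field|lra|]. generalize PI_RGT_0; lra. }
apply (filterlim_comp _ _ _ (fun y => G (y / sqrt 2)) (fun z => scal (sqrt 2) z)
   _ (locally (sqrt PI / 2))).
2: apply (@filterlim_scal_r R_AbsRing R_NormedModule).
apply (filterlim_comp _ _ _ (fun y => y / sqrt 2) G _ (Rbar_locally p_infty)).
2: exact gauss_RInt_lim.
intros P [M HM]. exists (M * sqrt 2). intros x Hx. apply HM.
apply (Rmult_lt_reg_r (sqrt 2)); auto. unfold Rdiv. rewrite Rmult_assoc Rinv_l; lra.
Qed.

Lemma g_even t : g (- t) = g t.
Proof. unfold g. f_equal. field. Qed.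

Lemma K_odd z : RInt g 0 (- z) = - RInt g 0 z.
Proof.
have H := RInt_comp_lin g (-1) 0 0 z (g_ex_RInt _ _).
replace (-1 * 0 + 0) with 0 in H by ring.
replace (-1 * z + 0) with (- z) in H by ring.
rewrite -H.
rewrite (RInt_ext _ (fun y => scal (-1) (g y))).
  rewrite RInt_scal. 2: apply g_ex_RInt.
  rewrite /scal /= /mult /=. change (@eq R (-1 * RInt g 0 z) (- RInt g 0 z)). ring.
intros x _. replace (-1 * x + 0) with (- x) by ring. rewrite g_even. reflexivity.
Qed.

Lemma K_lim_m : filterlim (fun y => RInt g 0 y) (Rbar_locally m_infty)
  (locally (- (sqrt (2 * PI) / 2))).
Proof.
apply (filterlim_ext (fun y => scal (-1) (RInt g 0 (- y)))).
  intros y. rewrite K_odd /scal /= /mult /=. ring.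
replace (- (sqrt (2 * PI) / 2)) with (scal (-1) (sqrt (2 * PI) / 2)).
2: { rewrite /scal /= /mult /=. ring. }
apply (filterlim_comp _ _ _ (fun y => RInt g 0 (- y)) (fun z => scal (-1) z)
   _ (locally (sqrt (2 * PI) / 2))).
2: apply (@filterlim_scal_r R_AbsRing R_NormedModule).
apply (filterlim_comp _ _ _ (fun y => - y) (fun y => RInt g 0 y) _ (Rbar_locally p_infty)).
2: exact K_lim.
intros P [M HM]. exists (- M). intros x Hx. apply HM. lra.
Qed.

Definition P (y : R) : R := / sqrt (2 * PI) * RInt g 0 y.

Lemma sqrt2PI_pos : 0 < sqrt (2 * PI).
Proof. apply sqrt_lt_R0. generalize PI_RGT_0; lra. Qed.

Lemma P_derive y : Derive.is_derive P y (std_normal_pdf y).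
Proof.
apply/is_derive_Reals. unfold P, std_normal_pdf.
apply derivable_pt_lim_scal. exact (K_derive y).
Qed.

Lemma Derive_P y : Derive P y = std_normal_pdf y.
Proof. apply is_derive_unique. apply P_derive. Qed.

Lemma pdf_cont y : continuity_pt std_normal_pdf y.
Proof.
unfold std_normal_pdf. apply continuity_pt_scal. apply g_cont.
Qed.

Lemma Phi_eq x : Phi x = P x + 1 / 2.
Proof.
unfold Phi. apply is_RInt_gen_unique.
have H := is_RInt_gen_Derive (Fa := Rbar_locally m_infty) (Fb := at_point x) P (- (1/2)) (P x).
replace (P x + 1 / 2) with (P x - - (1/2)) by ring.
apply (@is_RInt_gen_ext _ _ _ _ _ (Derive P)).
  apply Hierarchy.filter_forall. intros ab t _. apply Derive_P.
apply H; [typeclasses eauto | typeclasses eauto | | | | ].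
- apply Hierarchy.filter_forall. intros ab t _. exists (std_normal_pdf t). apply P_derive.
- apply Hierarchy.filter_forall. intros ab t _. apply (continuous_ext std_normal_pdf).
    intros z. symmetry. apply Derive_P.
  apply continuity_pt_filterlim. apply pdf_cont.
- apply (filterlim_ext (fun y => scal (/ sqrt (2 * PI)) (RInt g 0 y))).
    intros y. reflexivity.
  replace (- (1/2)) with (scal (/ sqrt (2 * PI)) (- (sqrt (2 * PI) / 2))).
  2: { rewrite /scal /= /mult /=. have := sqrt2PI_pos. intros. field. lra. }
  apply (filterlim_comp _ _ _ (fun y => RInt g 0 y) (fun z => scal (/ sqrt (2 * PI)) z)
     _ (locally (- (sqrt (2 * PI) / 2)))).
  2: apply (@filterlim_scal_r R_AbsRing R_NormedModule).
  exact K_lim_m.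
- intros Q HQ. unfold filtermap, at_point. apply locally_singleton. exact HQ.
Qed.

Lemma pos_from_deriv (f f' : R -> R) x : 0 < x -> f 0 = 0 ->
  (forall c, derivable_pt_lim f c (f' c)) ->
  (forall c, 0 < c -> c < x -> 0 < f' c) -> 0 < f x.
Proof.
intros hx f0 df pf.
destruct (MVT_cor2 f f' 0 x hx (fun c _ => df c)) as [c [e [c0 cx]]].
rewrite f0 in e. replace (f x) with (f' c * (x - 0)) by lra.
apply Rmult_lt_0_compat. apply pf; lra. lra.
Qed.

Lemma lower x : 0 < x -> x * exp (- x ^ 2 / 6) < RInt g 0 x.
Proof.
intros hx.
set f1 := fun y => RInt g 0 y - y * exp (- y ^ 2 / 6).
set f1' := fun y => g y - (exp (- y ^ 2 / 6) + y * (exp (- y ^ 2 / 6) * (- (2 * y) / 6))).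
enough (0 < f1 x) by (unfold f1 in *; lra).
apply (pos_from_deriv f1 f1' x hx).
- unfold f1. rewrite RInt_point. set z := Hierarchy.zero. change z with 0. ring.
- intros c. unfold f1, f1'.
  apply (derivable_pt_lim_minus (fun y => RInt g 0 y) (fun y => y * exp (- y ^ 2 / 6))).
  + apply K_derive.
  + apply/is_derive_Reals. auto_derive. auto.
    replace (- (c * (c * 1)) * / 6) with (- c ^ 2 / 6) by field. field.
- intros c c0 cx. unfold f1', g.
  replace (- c ^ 2 / 2) with (- c ^ 2 / 6 + - c ^ 2 / 3) by field.
  rewrite exp_plus.
  have h1 := exp_pos (- c ^ 2 / 6).
  have h2 : 1 + - c ^ 2 / 3 < exp (- c ^ 2 / 3).
    apply exp_ineq1. have : 0 < c ^ 2 by apply pow_lt. lra.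
  nra.
Qed.

Lemma k_pos c : 0 < c ->
  0 < exp (c ^ 2 / 3 + c ^ 4 / 90) * (1 - c ^ 2 / 3 + 2 * c ^ 4 / 45) - 1.
Proof.
intros hc.
set k := fun s => exp (s ^ 2 / 3 + s ^ 4 / 90) * (1 - s ^ 2 / 3 + 2 * s ^ 4 / 45) - 1.
set k' := fun s => exp (s ^ 2 / 3 + s ^ 4 / 90) * (2 * s ^ 5 / 135 + 4 * s ^ 7 / 2025).
apply (pos_from_deriv k k' c hc).
- unfold k. replace (0 ^ 2 / 3 + 0 ^ 4 / 90) with 0 by field. rewrite exp_0. field.
- intros s. unfold k, k'. apply/is_derive_Reals. auto_derive. auto.
  match goal with |- context [exp (?u * / 3 + ?v * / 90)] =>
    replace (exp (u * / 3 + v * / 90)) with (exp (s ^ 2 / 3 + s ^ 4 / 90)) by (f_equal; field) end.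
  field.
- intros s s0 _. unfold k'. apply Rmult_lt_0_compat. apply exp_pos.
  have := pow_lt s 5 s0. have := pow_lt s 7 s0. lra.
Qed.

Lemma upper x : 0 < x -> RInt g 0 x < x * exp (- x ^ 2 / 6 + x ^ 4 / 90).
Proof.
intros hx.
set f2 := fun y => y * exp (- y ^ 2 / 6 + y ^ 4 / 90) - RInt g 0 y.
set f2' := fun y => exp (- y ^ 2 / 6 + y ^ 4 / 90) * (1 - y ^ 2 / 3 + 2 * y ^ 4 / 45) - g y.
enough (0 < f2 x) by (unfold f2 in *; lra).
apply (pos_from_deriv f2 f2' x hx).
- unfold f2. rewrite RInt_point. set z := Hierarchy.zero. change z with 0. ring.
- intros c. unfold f2, f2'.
  apply (derivable_pt_lim_minus (fun y => y * exp (- y ^ 2 / 6 + y ^ 4 / 90)) (fun y => RInt g 0 y)).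
  + apply/is_derive_Reals. auto_derive. auto.
    match goal with |- context [exp (?u * / 6 + ?v * / 90)] =>
      replace (exp (u * / 6 + v * / 90)) with (exp (- c ^ 2 / 6 + c ^ 4 / 90)) by (f_equal; field) end.
    field.
  + apply K_derive.
- intros c c0 cx. unfold f2', g.
  replace (- c ^ 2 / 6 + c ^ 4 / 90) with (- c ^ 2 / 2 + (c ^ 2 / 3 + c ^ 4 / 90)) by field.
  rewrite exp_plus.
  have h1 := exp_pos (- c ^ 2 / 2).
  have h2 := k_pos c c0.
  nra.
Qed.

Theorem lemma3p2 (x : R) (hx : 0 < x) :
  x * exp (- x ^ 2 / 6) < sqrt (2 * PI) * (Phi x - 1 / 2) /\
  sqrt (2 * PI) * (Phi x - 1 / 2) < x * exp (- x ^ 2 / 6 + x ^ 4 / 90).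
Proof.
have e : sqrt (2 * PI) * (Phi x - 1 / 2) = RInt g 0 x.
  rewrite Phi_eq. unfold P. have := sqrt2PI_pos. intros.
  change (@eq R (sqrt (2 * PI) * (/ sqrt (2 * PI) * RInt g 0 x + 1 / 2 - 1 / 2)) (RInt g 0 x)).
  field. lra.
rewrite e. split. apply lower; auto. apply upper; auto.
Qed.
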